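(* Let $\mu$ be a distribution on $\Sigma\times\Gamma\times\Phi$ (finite sets). If $\mu$ has no $\mathbb{Z}$-embeddings, then $\mu$ is pairwise-connected.
   Context: An embedding of $\mu$ into an Abelian group $A$ is a triple of maps $\mathsf{a}:\Sigma\to A$, $\mathsf{b}:\Gamma\to A$, $\mathsf{c}:\Phi\to A$ with $\mathsf{a}(x)+\mathsf{b}(y)+\mathsf{c}(z)=0$ for all $(x,y,z)\in\mathsf{supp}(\mu)$; $\mu$ has no $\mathbb{Z}$-embeddings if every embedding into $(\mathbb{Z},+)$ consists of constant maps. $\mu$ is $(x,y)$-pairwise-connected if the bipartite graph on vertex set $\Sigma\sqcup\Gamma$, with an edge between $x\in\Sigma$ and $y\in\Gamma$ whenever there is $z$ with $(x,y,z)\in\mathsf{supp}(\mu)$, is connected; $(y,z)$- and $(x,z)$-pairwise-connectivity are defined analogously; $\mu$ is pairwise-connected if it is $(x,y)$-, $(y,z)$- and $(x,z)$-pairwise-connected. *)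

(* Defs.v *)
From mathcomp Require Import all_boot all_order all_algebra.
Set Implicit Arguments. Unset Strict Implicit. Unset Printing Implicit Defensive.
Import Order.TTheory GRing.Theory Num.Theory.
Local Open Scope ring_scope.

Definition is_distribution (R : realFieldType) (S G F : finType)
  (mu : S -> G -> F -> R) : Prop :=
  (forall x y z, 0 <= mu x y z) /\ \sum_(x : S) \sum_(y : G) \sum_(z : F) mu x y z = 1.

Definition in_supp (R : realFieldType) (S G F : finType)
  (mu : S -> G -> F -> R) x y z : bool := 0 < mu x y z.

Definition Z_embedding (R : realFieldType) (S G F : finType)
  (mu : S -> G -> F -> R) (a : S -> int) (b : G -> int) (c : F -> int) : Prop :=
  forall x y z, in_supp mu x y z -> a x + b y + c z = 0.

Definition const_map (T : Type) (f : T -> int) : Prop := forall t t', f t = f t'.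

Definition no_Z_embeddings (R : realFieldType) (S G F : finType)
  (mu : S -> G -> F -> R) : Prop :=
  forall a b c, Z_embedding mu a b c -> [/\ const_map a, const_map b & const_map c].

Definition bip_rel (A B : finType) (r : A -> B -> bool) : rel (A + B)%type :=
  fun u v => match u, v with
             | inl x, inr y => r x y
             | inr y, inl x => r x y
             | _, _ => false
             end.

Definition bip_connected (A B : finType) (r : A -> B -> bool) : Prop :=
  forall u v : (A + B)%type, connect (bip_rel r) u v.

Definition xy_connected (R : realFieldType) (S G F : finType)
  (mu : S -> G -> F -> R) : Prop :=
  bip_connected (fun (x : S) (y : G) => [exists z : F, in_supp mu x y z]).
Definition yz_connected (R : realFieldType) (S G F : finType)
  (mu : S -> G -> F -> R) : Prop :=
  bip_connected (fun (y : G) (z : F) => [exists x : S, in_supp mu x y z]).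
Definition xz_connected (R : realFieldType) (S G F : finType)
  (mu : S -> G -> F -> R) : Prop :=
  bip_connected (fun (x : S) (z : F) => [exists y : G, in_supp mu x y z]).

Definition pairwise_connected (R : realFieldType) (S G F : finType)
  (mu : S -> G -> F -> R) : Prop :=
  [/\ xy_connected mu, yz_connected mu & xz_connected mu].

(* Main.v *)
Require Import Defs.
From mathcomp Require Import all_boot all_order all_algebra.
Import Order.TTheory GRing.Theory Num.Theory.
Local Open Scope ring_scope.

Lemma bip_sym (A B : finType) (r : A -> B -> bool) : symmetric (bip_rel r).
Proof. by case=> [a|b] [a'|b']. Qed.

Lemma gen_conn (A B : finType) (r : A -> B -> bool) (x0 : A) (y0 : B) :
  r x0 y0 ->
  (forall (f : A -> int) (g : B -> int),
     (forall x y, r x y -> f x + g y = 0) -> const_map f /\ const_map g) ->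
  bip_connected r.
Proof.
move=> r0 H u v.
have cs := sym_connect_sym (@bip_sym _ _ r).
set C := fun w => connect (bip_rel r) u w.
have eqC : forall x y, r x y -> C (inl x) = C (inr y).
  move=> x y rxy.
  have e1 : connect (bip_rel r) (inl x) (inr y) by apply: connect1.
  rewrite /C; apply/idP/idP => h.
    exact: connect_trans h e1.
  by apply: connect_trans h _; rewrite cs.
have [cf cg] : const_map (fun x => (C (inl x))%:Z) /\ const_map (fun y => - (C (inr y))%:Z).
  by apply: H => x y rxy; rewrite (eqC x y rxy) subrr.
have Cu : C u by rewrite /C connect0.
change (C v); clearbody C.
have Cx0 : C (inl x0).
  case: u Cu => [a|b] Cu.
    by have := cf x0 a; rewrite Cu; case: (C _) => // h; inversion h.
  by rewrite (eqC x0 y0 r0); have := cg y0 b; rewrite Cu; case: (C _) => // h; inversion h.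
have Cy0 : C (inr y0) by rewrite -(eqC x0 y0 r0).
case: v => [a|b].
  by have := cf a x0; rewrite Cx0; case: (C _) => // h; inversion h.
by have := cg b y0; rewrite Cy0; case: (C _) => // h; inversion h.
Qed.

Theorem lemma1p3 (R : realFieldType) (S G F : finType) (mu : S -> G -> F -> R) :
  is_distribution mu -> no_Z_embeddings mu -> pairwise_connected mu.
Proof.
move=> [pos sum1] noZ.
have : [exists x, exists y, exists z, in_supp mu x y z].
  case: (boolP [exists x, exists y, exists z, in_supp mu x y z]) => [//|]; rewrite negb_exists => /forallP hx.
  suff : \sum_(x : S) \sum_(y : G) \sum_(z : F) mu x y z = 0.
    by rewrite sum1 => /eqP; rewrite oner_eq0.
  apply: big1 => x _; apply: big1 => y _; apply: big1 => z _.
  have := hx x; rewrite negb_exists => /forallP /(_ y).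
  rewrite negb_exists => /forallP /(_ z); rewrite /in_supp.
  by rewrite lt_def pos andbT negbK => /eqP.
move=> /existsP [x0 /existsP [y0 /existsP [z0 s0]]].
split.
- apply: (@gen_conn _ _ _ x0 y0); first by apply/existsP; exists z0.
  move=> f g E.
  have [] := noZ f g (fun _ => 0) => [x y z /(fun h => E x y (introT existsP (ex_intro _ z h))) ->|]; first by [].
  by [].
- apply: (@gen_conn _ _ _ y0 z0); first by apply/existsP; exists x0.
  move=> f g E.
  have [] := noZ (fun _ => 0) f g => [x y z /(fun h => E y z (introT existsP (ex_intro _ x h)))|]; first by rewrite add0r.
  by [].
- apply: (@gen_conn _ _ _ x0 z0); first by apply/existsP; exists y0.
  move=> f g E.
  have [] := noZ f (fun _ => 0) g => [x y z /(fun h => E x z (introT existsP (ex_intro _ y h)))|]; first by rewrite addr0.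
  by [].
Qed.
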